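(* Let $G$ be a finite simple connected graph with exactly $h$ holes. Suppose that all the holes in $G$ are pairwise edge-disjoint and that $G$ has exactly one non-edge maximal clique $K$. If, for some edge $e$ of a hole $H$ of $G$, the graph $G-e$ has at least $h$ holes, then $e$ is an edge of $K$. Moreover, in that case, writing $e=v_iv_j$, every hole of $G-e$ which is not a hole of $G$ has the form $(H-v_iv_j)\cup\{v_iv_k,v_jv_k\}$ for some vertex $v_k$ of $K$.
   Context: A hole of a graph is an induced (chordless) cycle of length at least $4$. A clique is a complete subgraph; a clique is non-edge if it has at least $3$ vertices. $G-e$ denotes the graph obtained from $G$ by deleting the edge $e$. *)

(* Defs.v *)
From Stdlib Require Import ClassicalEpsilon.
From mathcomp Require Import all_boot.
Set Implicit Arguments. Unset Strict Implicit. Unset Printing Implicit Defensive.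

Definition simple_graph (T : finType) (g : rel T) :=
  symmetric g /\ irreflexive g.

Definition connected_graph (T : finType) (g : rel T) :=
  forall x y : T, connect g x y.

(* A hole: induced (chordless) cycle of length >= 4.  Since an induced
   subgraph is determined by its vertex set, a hole is recorded by its
   vertex set S: S can be listed (without repetition) as a cycle p of
   length >= 4 of g, and every edge of g between vertices of S joins
   cycle-consecutive vertices (no chords). *)
Definition is_hole (T : finType) (g : rel T) (S : {set T}) : Prop :=
  exists p : seq T,
    [/\ uniq p, S =i p, 4 <= size p, cycle g p &
        forall x y, x \in p -> y \in p -> g x y -> (y == next p x) || (y == prev p x)].

Definition holes (T : finType) (g : rel T) : {set {set T}} :=
  [set S : {set T} | if excluded_middle_informative (is_hole g S) then true else false].

Definition hole_edges (T : finType) (g : rel T) (S : {set T}) : {set T * T} :=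
  [set p : T * T | [&& p.1 \in S, p.2 \in S & g p.1 p.2]].

Definition is_clique (T : finType) (g : rel T) (K : {set T}) : Prop :=
  forall x y, x \in K -> y \in K -> x != y -> g x y.

Definition is_maximal_clique (T : finType) (g : rel T) (K : {set T}) : Prop :=
  is_clique g K /\ forall K' : {set T}, is_clique g K' -> K \subset K' -> K' = K.

Definition non_edge_clique (T : finType) (K : {set T}) : Prop := 3 <= #|K|.

Definition del_edge (T : finType) (g : rel T) (a b : T) : rel T :=
  fun x y => g x y && ~~ (((x == a) && (y == b)) || ((x == b) && (y == a))).

(* Main.v *)
Require Import Defs.
From Stdlib Require Import ClassicalEpsilon.
From mathcomp Require Import all_boot.
Set Implicit Arguments. Unset Strict Implicit. Unset Printing Implicit Defensive.

Section S.
Variable T : finType.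
Implicit Types (e g : rel T) (p q : seq T).

Definition nb e p x := [set y | (y \in p) && e x y].

Lemma in_nb e p x y : (y \in nb e p x) = (y \in p) && e x y.
Proof. by rewrite inE. Qed.

Lemma next_neq_prev p x : uniq p -> 3 <= size p -> x \in p -> next p x != prev p x.
Proof.
move=> Up Sp xp; case: (rot_to xp) => i s' Er.
rewrite -(next_rot i Up) -(prev_rot i Up).
have Up' : uniq (rot i p) by rewrite rot_uniq.
have Sp' : 3 <= size (rot i p) by rewrite size_rot.
rewrite Er in Up' Sp' *.
case: s' Er Up' Sp' => [|y [|z t]] // Er Up' _.
apply/negP => /eqP E.
have := next_prev Up' x; rewrite -E.
rewrite /= eqxx.
have -> : (y == x) = false.
  by apply/negbTE; move: Up' => /= /andP [H _]; apply/negP => /eqP Eq; rewrite Eq inE eqxx in H.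
rewrite eqxx => Ezx.
by move: Up'; rewrite /= Ezx !inE eqxx !orbT.
Qed.

Lemma card3 (x y z : T) : x != y -> x != z -> y != z -> #|[set x; y; z]| = 3.
Proof.
move=> xy xz yz; rewrite -setUA cardsU1 cards2 yz !inE negb_or xy xz. by [].
Qed.

Lemma nb_nextprev e p x : symmetric e -> cycle e p -> x \in p ->
  next p x \in nb e p x /\ prev p x \in nb e p x.
Proof.
move=> Se Cp xp; rewrite !in_nb mem_next mem_prev xp next_cycle //.
by rewrite Se prev_cycle.
Qed.

Lemma nb_ge2 e p x : symmetric e -> uniq p -> 3 <= size p -> cycle e p -> x \in p ->
  2 <= #|nb e p x|.
Proof.
move=> Se Up Sp Cp xp; have [H1 H2] := nb_nextprev Se Cp xp.
have <- : #|[set next p x; prev p x]| = 2 by rewrite cards2 next_neq_prev.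
apply: subset_leq_card; apply/subsetP => y; rewrite !inE => /orP [] /eqP ->; rewrite -?in_nb. 
  by move: H1; rewrite in_nb. by move: H2; rewrite in_nb.
Qed.

Definition hole2 e (S : {set T}) := exists p,
  [/\ uniq p, S =i p, 4 <= size p, cycle e p & forall x, x \in p -> #|nb e p x| <= 2].

Lemma holeP e S : symmetric e -> is_hole e S <-> hole2 e S.
Proof.
move=> Se; split.
  case=> p [Up Sp Zp Cp Hp]; exists p; split=> // x xp.
  apply: leq_trans (_ : #|[set next p x; prev p x]| <= 2); last by rewrite cards2; case: (_ != _).
  apply: subset_leq_card; apply/subsetP => y; rewrite in_nb => /andP [yp exy].
  by rewrite !inE; apply: Hp.
case=> p [Up Sp Zp Cp Hp]; exists p; split=> // x y xp yp exy.
apply/negPn/negP; rewrite negb_or => /andP [n1 n2].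
have [H1 H2] := nb_nextprev Se Cp xp.
have : 3 <= #|nb e p x|.
  have <- : #|[set next p x; prev p x; y]| = 3.
    rewrite card3 //; first by rewrite next_neq_prev // (leq_trans _ Zp).
    by rewrite eq_sym. by rewrite eq_sym.
  apply: subset_leq_card; apply/subsetP => z; rewrite !inE => /orP [/orP [] | ] /eqP ->.
  by move: H1; rewrite in_nb. by move: H2; rewrite in_nb. by rewrite yp exy.
by rewrite ltnNge Hp.
Qed.

Lemma deg_aux e g c r x o w : {subset c <= r} -> #|nb e r x| <= 2 -> w \in nb e r x ->
  w \notin c -> (forall y, y \in c -> g x y -> y != o -> e x y) -> #|nb g c x| <= 2.
Proof.
move=> scr Hd wn wc Hy.
have Hs : nb g c x \subset o |: (nb e r x :\ w).
  apply/subsetP => y; rewrite in_nb => /andP [yc gxy].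
  rewrite in_setU1 in_setD1; case: eqP => //= /eqP yo.
  rewrite in_nb scr ?Hy // !andbT; apply/eqP => E; by rewrite -E yc in wc.
apply: leq_trans (subset_leq_card Hs) _.
rewrite cardsU1; move: Hd; rewrite (cardsD1 w) wn add1n ltnS.
by case: (_ \notin _) => /= H; rewrite ?add1n ?add0n ?ltnS // (leq_trans H).
Qed.

Lemma subhole e g a b s1 z s2' :
  symmetric g -> symmetric e -> subrel e g -> g a b ->
  (forall x y, g x y -> e x y || ((x==a)&&(y==b)) || ((x==b)&&(y==a))) ->
  uniq (a :: s1 ++ b :: z :: s2') -> cycle e (a :: s1 ++ b :: z :: s2') ->
  (forall x, x \in (a :: s1 ++ b :: z :: s2') -> #|nb e (a :: s1 ++ b :: z :: s2') x| <= 2) ->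
  2 <= size s1 -> hole2 g [set x in a :: s1 ++ [:: b]].
Proof.
move=> Sg Se Seg gab Hge.
set r := a :: s1 ++ b :: z :: s2'; set c := a :: s1 ++ [:: b]; set s2 := z :: s2'.
have Er : r = c ++ s2 by rewrite /r /c /= -catA.
move=> Ur Cr Dr Zs1.
have scr : {subset c <= r} by move=> y; rewrite Er mem_cat => ->.
move: (Ur); rewrite Er cat_uniq => /and3P [Uc /hasPn Dc _].
have ab : a != b.
  by move: Uc; rewrite /c /= mem_cat inE negb_or => /andP [/andP [_ /eqP ?] _]; apply/eqP.
move: (Cr); rewrite /r /= rcons_cat cat_path /= rcons_path => /and4P [P1 eb Pz ela].
exists c; split => //.
- by move=> x; rewrite inE.
- by rewrite /c /= size_cat /= addn1.
- rewrite /c /= rcons_cat cat_path /= (sub_path Seg P1) (Seg _ _ eb) /= andbT.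
  by rewrite Sg.
have ws2 : last z s2' \in s2 by apply: mem_last.
have zs2 : z \in s2 by rewrite inE eqxx.
have s2r : {subset s2 <= r} by move=> y; rewrite Er mem_cat orbC => ->.
move/andP: ela => [_ ela].
move=> x xc; case: (eqVneq x a) => [->|xa].
  apply: (deg_aux (o := b) (w := last z s2') scr); first by apply: Dr; rewrite inE eqxx.
  - by rewrite in_nb s2r // Se.
  - exact: Dc.
  move=> y yc gay yb; move: (Hge _ _ gay); rewrite eqxx (negbTE yb) /=.
  by rewrite (negbTE ab) /= !orbF.
case: (eqVneq x b) => [->|xb].
  apply: (deg_aux (o := a) (w := z) scr); first by apply: Dr; rewrite /r !(inE, mem_cat) eqxx !orbT.
  - by rewrite in_nb s2r.
  - exact: Dc.
  move=> y yc gay ya; move: (Hge _ _ gay); rewrite eqxx (negbTE ya) /=.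
  by rewrite eq_sym (negbTE ab) /= !orbF.
apply: leq_trans (Dr x (scr _ xc)); apply: subset_leq_card; apply/subsetP => y.
rewrite !in_nb => /andP [yc gxy]; rewrite scr //=.
by move: (Hge _ _ gxy); rewrite (negbTE xa) (negbTE xb) /= !orbF.
Qed.

Definition cliqueb g (C : {set T}) := [forall x in C, forall y in C, (x != y) ==> g x y].

Lemma cliqueP g C : reflect (is_clique g C) (cliqueb g C).
Proof.
apply: (iffP idP).
  by move=> /forall_inP H x y xC yC xy; move: (H x xC) => /forall_inP /(_ y yC) /implyP; apply.
by move=> H; apply/forall_inP => x xC; apply/forall_inP => y yC; apply/implyP; apply: H.
Qed.

Lemma max_clique_ext g C : is_clique g C -> exists M, is_maximal_clique g M /\ C \subset M.
Proof.
move=> /cliqueP HC.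
have P0 : cliqueb g C && (C \subset C) by rewrite HC subxx.
case: (@arg_maxnP _ C (fun M => cliqueb g M && (C \subset M)) (fun M => #|M|) P0) => M /andP [cM sCM] Hmax.
exists M; split => //; split; first exact/cliqueP.
move=> K' /cliqueP cK' sMK'; apply/eqP; rewrite eq_sym eqEcard sMK' /=.
by apply: Hmax; rewrite cK' (subset_trans sCM sMK').
Qed.

Lemma in_holes g S : (S \in holes g) <-> is_hole g S.
Proof. by rewrite inE; case: excluded_middle_informative. Qed.

Lemma in_hole_edges g S u v : ((u, v) \in hole_edges g S) = [&& u \in S, v \in S & g u v].
Proof. by rewrite inE. Qed.

Lemma nb_rot e p i x : nb e (rot i p) x = nb e p x.
Proof. by apply/setP => y; rewrite !in_nb mem_rot. Qed.

End S.

Section Core.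
Variables (T : finType) (g e : rel T) (K H : {set T}) (x y : T).
Hypotheses (Sg : symmetric g) (Ig : irreflexive g)
 (Hdisj : forall S1 S2, S1 \in holes g -> S2 \in holes g -> S1 != S2 ->
     [disjoint hole_edges g S1 & hole_edges g S2])
 (HKu : forall K', is_maximal_clique g K' -> non_edge_clique K' -> K' = K)
 (HK : is_maximal_clique g K) (HH : H \in holes g) (xH : x \in H) (yH : y \in H) (gxy : g x y)
 (Hee : forall u v, e u v = g u v && ~~ ((u==x)&&(v==y) || (u==y)&&(v==x))).

Lemma Se : symmetric e.
Proof. by move=> u v; rewrite !Hee Sg orbC [(v==x) && _]andbC [(v==y) && _]andbC. Qed.

Lemma Seg : subrel e g.
Proof. by move=> u v; rewrite Hee => /andP []. Qed.

Lemma tri_K k : g x k -> g y k -> x != k -> y != k -> x != y -> [/\ k \in K, x \in K & y \in K].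
Proof.
move=> gxk gyk xk yk xy.
have C : is_clique g [set x; y; k].
  move=> u v; rewrite !inE => /orP[/orP[]|] /eqP -> /orP[/orP[]|] /eqP ->; rewrite ?eqxx //= => _;
  by rewrite // Sg.
case: (max_clique_ext C) => M [HM sM].
have E : M = K.
  apply: HKu => //; rewrite /non_edge_clique -(card3 xy xk yk); exact: subset_leq_card.
by rewrite -E; split; apply: (subsetP sM); rewrite !inE eqxx ?orbT.
Qed.

Lemma core k s2 (H' : {set T}) :
 uniq (x :: k :: y :: s2) -> H' =i (x :: k :: y :: s2) -> 4 <= size (x :: k :: y :: s2) ->
 cycle e (x :: k :: y :: s2) ->
 (forall u, u \in (x :: k :: y :: s2) -> #|nb e (x :: k :: y :: s2) u| <= 2) ->
 [/\ x \in K, y \in K, k \in K & hole_edges e H' =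
   ((hole_edges g H :\ (x,y)) :\ (y,x)) :|: [set (x,k);(k,x);(y,k);(k,y)]].
Proof.
set r := x :: k :: y :: s2 => Ur H'r Sr Cr Dr.
case: s2 => [|z s2'] in r Ur H'r Sr Cr Dr *; first by [].
move: (Cr) => /= /and4P [exk eky eyz Prest].
move: (Ur) => /= /and4P [nx nk ny _].
move: (nx); rewrite inE negb_or => /andP [xk nx'].
move: (nx'); rewrite inE negb_or => /andP [xy nx''].
move: (nk); rewrite inE negb_or => /andP [ky nk'].
have gxk := Seg exk; have gyk : g y k by rewrite Sg; exact: Seg eky.
have [kK xK yK] := tri_K gxk gyk xk (negbT (etrans (eq_sym y k) (negbTE ky))) xy.
have exK : forall u, u \in r -> e k u -> (u == x) || (u == y).
  move=> u ur eku; apply/negPn/negP; rewrite negb_or => /andP [ux uy].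
  have := Dr k; rewrite /r !inE eqxx orbT => /(_ isT).
  have : 3 <= #|nb e r k|.
    rewrite -(card3 xy (_ : x != u) (_ : y != u)) 1?eq_sym //; apply: subset_leq_card; apply/subsetP => t.
    rewrite !in_setU !in_set1 => /orP [/orP [] | ] /eqP ->; rewrite in_nb ?ur ?eku //.
      by rewrite /r inE eqxx Se exk.
    by rewrite /r !inE eqxx !orbT eky.
  by move=> H1 H2; move: (leq_trans H1 H2).
split => //.
case: s2' => [|w s2''] in r Ur H'r Sr Cr Dr Prest nx nk ny nx' nx'' nk' exK *.
  move: Prest => /= /andP [ezx _].
  have zx : z != x by move: nx''; rewrite inE eq_sym.
  have zy : y != z by move: ny; rewrite inE.
  have kz : k != z by move: nk'; rewrite inE.
  have gyz := Seg eyz.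
  have gxz : g x z by rewrite Sg; exact: Seg ezx.
  have [zK _ _] := tri_K gxz gyz (negbT (etrans (eq_sym x z) (negbTE zx))) zy xy.
  have ekz : e k z.
    rewrite Hee (HK.1 _ _ kK zK kz) /= negb_or !negb_and.
    by rewrite (negbT (etrans (eq_sym k x) (negbTE xk))) (negbTE ky).
  have := exK z; rewrite /r !inE eqxx !orbT => /(_ isT ekz).
  by rewrite (negbTE zx) eq_sym (negbTE zy).
have Erot : rot 2 r = y :: (z :: w :: s2'') ++ [:: x; k] by [].
have Hge : forall u v, g u v -> e u v || ((u==y)&&(v==x)) || ((u==x)&&(v==y)).
  move=> u v guv; rewrite Hee guv /=.
  by case: ((u == x) && (v == y)); case: ((u == y) && (v == x)).
have U2 : uniq (y :: (z :: w :: s2'') ++ [:: x; k]) by rewrite -Erot rot_uniq.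
have C2' : cycle e (y :: (z :: w :: s2'') ++ [:: x; k]) by rewrite -Erot rot_cycle.
have D2 : forall u, u \in (y :: (z :: w :: s2'') ++ [:: x; k]) ->
   #|nb e (y :: (z :: w :: s2'') ++ [:: x; k]) u| <= 2.
  by move=> u; rewrite -Erot nb_rot mem_rot; exact: Dr.
have gyx : g y x by rewrite Sg.
have Hh2 := subhole (a:=y) (b:=x) (s1:= z::w::s2'') (z:=k) (s2':=[::]) Sg Se Seg gyx Hge U2 C2' D2 isT.
set C2 := [set u in _] in Hh2.
have HC2 : C2 \in holes g by apply/in_holes/holeP.
have EC2 : C2 = H.
  apply/eqP; apply/negPn/negP => ne.
  have := disjointFr (Hdisj HC2 HH ne) (_ : (x,y) \in hole_edges g C2).
  rewrite [(x,y) \in hole_edges g H]in_hole_edges xH yH gxy => F.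
  suff : true = false by []; apply: F.
  by rewrite in_hole_edges /C2 !in_set !in_cons !mem_cat !mem_seq1 !eqxx gxy !orbT.
have memH : forall u, (u \in H) = (u == y) || (u \in z :: w :: s2'') || (u == x).
  by move=> u; rewrite -EC2 /C2 in_set in_cons mem_cat mem_seq1 orbA.
have memr : forall u, (u \in r) = (u == x) || (u == k) || (u == y) || (u \in z :: w :: s2'').
  by move=> u; rewrite /r 3!in_cons !orbA.
have rH : forall u, u != k -> (u \in r) = (u \in H).
  move=> u uk; rewrite memr memH (negbTE uk) orbF.
  by case: (u == x); case: (u == y); rewrite ?orbT ?orbF.
have kH : (k \in H) = false.
  rewrite memH (negbTE nk') (negbTE ky) eq_sym (negbTE xk).
  by [].
have kr : k \in r by rewrite memr eqxx orbT.
have nbk : forall v, (v \in r) && e k v = (v == x) || (v == y).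
  move=> v; apply/idP/idP; first by move=> /andP [vr ekv]; apply: exK.
  move=> /orP [] /eqP ->.
    by rewrite memr eqxx Se exk.
  by rewrite memr eqxx !orbT eky.
apply/setP => [[u v]].
rewrite in_hole_edges !H'r in_setU !in_setD1 in_hole_edges !in_setU !in_set1 !xpair_eqE.
case: (eqVneq u k) => [->|uk].
  rewrite kr /= nbk kH !andbF /= [k == x]eq_sym (negbTE xk) (negbTE ky) /=.
  by case: (v == x).
case: (eqVneq v k) => [->|vk].
  by rewrite kr kH /= !andbF /= Se nbk !andbT !orbF.
rewrite (rH _ uk) (rH _ vk) Hee !andbF /= !orbF.
by case: (u \in H); case: (v \in H); case: (g u v); case: (u == x); case: (v == y); case: (u == y); case: (v == x).
Qed.
End Core.

Section Main.
Variables (T : finType) (g : rel T) (K H : {set T}) (a b : T).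
Hypotheses (Sg : symmetric g) (Ig : irreflexive g)
 (Hdisj : forall S1 S2, S1 \in holes g -> S2 \in holes g -> S1 != S2 ->
     [disjoint hole_edges g S1 & hole_edges g S2])
 (HKu : forall K', is_maximal_clique g K' -> non_edge_clique K' -> K' = K)
 (HK : is_maximal_clique g K) (HH : H \in holes g) (aH : a \in H) (bH : b \in H) (gab : g a b).

Let e := del_edge g a b.
Let Hee : forall u v, e u v = g u v && ~~ ((u==a)&&(v==b) || (u==b)&&(v==a)).
Proof. by []. Qed.
Let Hee' : forall u v, e u v = g u v && ~~ ((u==b)&&(v==a) || (u==a)&&(v==b)).
Proof. by move=> u v; rewrite Hee orbC. Qed.
Let Se' : symmetric e := Se Sg Hee.
Let Seg' : subrel e g := Seg Hee.

Lemma eqH C : C \in holes g -> a \in C -> b \in C -> C = H.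
Proof.
move=> HC aC bC; apply/eqP; apply/negPn/negP => ne.
have := disjointFr (Hdisj HC HH ne) (_ : (a,b) \in hole_edges g C).
rewrite [(a,b) \in hole_edges g H]in_hole_edges aH bH gab => F.
suff : true = false by []; apply: F.
by rewrite in_hole_edges aC bC gab.
Qed.

Lemma analysis H' : H' \in holes e -> H' \notin holes g ->
  (a \in K /\ b \in K) /\ exists2 k, k \in K &
     hole_edges e H' = ((hole_edges g H :\ (a, b)) :\ (b, a)) :|: [set (a, k); (k, a); (b, k); (k, b)].
Proof.
move=> /in_holes /(holeP _ Se') [q [Uq H'q Sq Cq Dq]] nH'.
have abq : (a \in q) && (b \in q).
  case: (boolP [forall x, (x \in q) ==> (#|nb g q x| <= 2)]) => [/forallP Hall | ].
    exfalso; move/negP: nH'; apply; apply/in_holes/(holeP _ Sg).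
    exists q; split => //; first exact: (sub_cycle Seg' Cq).
    by move=> x xq; move: (Hall x); rewrite xq.
  move=> /forallPn [x]; rewrite negb_imply => /andP [xq Hx].
  have : ~~ (nb g q x \subset nb e q x).
    apply/negP => sub; move: Hx; rewrite -ltnNge => Hx.
    by move: (leq_trans Hx (leq_trans (subset_leq_card sub) (Dq x xq))).
  move=> /subsetPn [y]; rewrite !in_nb => /andP [yq gxy].
  rewrite yq Hee gxy /= negbK => /orP [] /andP [/eqP Ex /eqP Ey]; subst x y.
    by rewrite xq yq.
  by rewrite xq yq.
case/andP: abq => aq bq.
have ab : a != b by apply/eqP => E; move: gab; rewrite E Ig.
case: (rot_to aq) => i q' Eq.
have : b \in rot i q by rewrite mem_rot.
rewrite Eq inE (eq_sym b) (negbTE ab) /= => bq'.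
case/splitPr: bq' Eq => s1 s2 Eq.
have Ur : uniq (a :: s1 ++ b :: s2) by rewrite -Eq rot_uniq.
have H'r : H' =i (a :: s1 ++ b :: s2) by move=> u; rewrite -Eq mem_rot H'q.
have Sr : 4 <= size (a :: s1 ++ b :: s2) by rewrite -Eq size_rot.
have Cr : cycle e (a :: s1 ++ b :: s2) by rewrite -Eq rot_cycle.
have Dr : forall u, u \in (a :: s1 ++ b :: s2) -> #|nb e (a :: s1 ++ b :: s2) u| <= 2.
  by move=> u; rewrite -Eq nb_rot mem_rot; exact: Dq.
clear Eq Uq H'q Sq Cq Dq.
have eab : e a b = false by rewrite Hee !eqxx /= andbF.
have eba : e b a = false by rewrite Se'.
case: s1 => [|k1 s1] in Ur H'r Sr Cr Dr *.
  by move: Cr => /= /andP []; rewrite eab.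
case: s2 => [|z s2] in Ur H'r Sr Cr Dr *.
  by move: Cr; rewrite /= rcons_path last_cat /= eba !andbF.
have Hge : forall x y, g x y -> e x y || ((x==a)&&(y==b)) || ((x==b)&&(y==a)).
  move=> x y gxy; rewrite Hee gxy /=.
  by case: ((x == a) && (y == b)); case: ((x == b) && (y == a)).
case: s1 => [|k2 s1] in Ur H'r Sr Cr Dr *.
  have [aK bK kK E] := core Sg Hdisj HKu HK HH aH bH gab Hee (k:=k1) (s2 := z::s2) (H':=H') Ur H'r Sr Cr Dr.
  by split => //; exists k1.
have Er : rot (size (a :: k1 :: k2 :: s1)) (a :: (k1 :: k2 :: s1) ++ b :: z :: s2)
   = b :: z :: s2 ++ a :: k1 :: k2 :: s1 := rot_size_cat (a :: k1 :: k2 :: s1) (b :: z :: s2).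
have Ur' : uniq (b :: z :: s2 ++ a :: k1 :: k2 :: s1) by rewrite -Er rot_uniq.
have H'r' : H' =i (b :: z :: s2 ++ a :: k1 :: k2 :: s1) by move=> u; rewrite -Er mem_rot H'r.
have Sr' : 4 <= size (b :: z :: s2 ++ a :: k1 :: k2 :: s1) by rewrite -Er size_rot.
have Cr' : cycle e (b :: z :: s2 ++ a :: k1 :: k2 :: s1) by rewrite -Er rot_cycle.
have Dr' : forall u, u \in (b :: z :: s2 ++ a :: k1 :: k2 :: s1) ->
    #|nb e (b :: z :: s2 ++ a :: k1 :: k2 :: s1) u| <= 2.
  by move=> u; rewrite -Er nb_rot mem_rot; exact: Dr.
have gba : g b a by rewrite Sg.
case: s2 => [|w s2] in Ur H'r Sr Cr Dr Ur' H'r' Sr' Cr' Dr' Er *.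
  have [bK aK zK E] := core Sg Hdisj HKu HK HH bH aH gba Hee' (k:=z) (s2 := k1::k2::s1) (H':=H') Ur' H'r' Sr' Cr' Dr'.
  split => //; exists z => //; rewrite E.
  apply/setP => p; rewrite !in_setU !in_setD1 !in_set1.
  by case: (p == (a,b)); case: (p == (b,a)); case: (p == (a,z)); case: (p == (z,a));
    case: (p == (b,z)); case: (p == (z,b)).
exfalso.
have Hge' : forall x y, g x y -> e x y || ((x==b)&&(y==a)) || ((x==a)&&(y==b)).
  move=> x y gxy; rewrite Hee' gxy /=.
  by case: ((x == a) && (y == b)); case: ((x == b) && (y == a)).
have h1 := subhole (s1 := k1 :: k2 :: s1) (z := z) (s2' := w :: s2) Sg Se' Seg' gab Hge Ur Cr Dr isT.
have h2 := subhole (s1 := z :: w :: s2) (z := k1) (s2' := k2 :: s1) Sg Se' Seg' gba Hge' Ur' Cr' Dr' isT.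
have E1 := eqH (proj2 (in_holes _ _) (proj2 (holeP _ Sg) h1)).
have E2 := eqH (proj2 (in_holes _ _) (proj2 (holeP _ Sg) h2)).
have C1H := E1 ltac:(by rewrite in_set in_cons eqxx) ltac:(by rewrite in_set in_cons mem_cat mem_seq1 eqxx !orbT).
have C2H := E2 ltac:(by rewrite in_set in_cons mem_cat mem_seq1 eqxx !orbT) ltac:(by rewrite in_set in_cons eqxx).
have : k1 \in [set x in b :: (z :: w :: s2) ++ [:: a]].
  by rewrite C2H -C1H in_set !in_cons eqxx orbT.
move: Ur => /= /andP [na /andP [nk1 _]].
rewrite in_set !in_cons mem_cat mem_seq1.
move: nk1 na; rewrite !in_cons !mem_cat !in_cons (eq_sym a k1).
by case: (k1 == b); case: (k1 == z); case: (k1 == w); case: (k1 \in s2); case: (k1 == a);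
  rewrite /= ?orbT ?orbF.
Qed.

Lemma noHH : H \notin holes e.
Proof.
apply/negP => /in_holes /(holeP _ Se') [q [Uq Hq Sq Cq Dq]].
move: HH => /in_holes /(holeP _ Sg) [p [Up Hp Sp Cp Dp]].
have aq : a \in q by rewrite -Hq.
have ap : a \in p by rewrite -Hp.
have ab : a != b by apply/eqP => E; move: gab; rewrite E Ig.
have sub : nb e q a \subset nb g p a :\ b.
  apply/subsetP => y; rewrite in_setD1 !in_nb => /andP [yq eay].
  rewrite -Hp Hq yq (Seg' eay) !andbT; apply/eqP => E; move: eay; rewrite E Hee !eqxx.
  by rewrite andbF.
have bn : b \in nb g p a by rewrite in_nb -Hp bH gab.
have c1 : #|nb g p a :\ b| <= 1 by move: (Dp a ap); rewrite (cardsD1 b) bn.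
by have := leq_trans (nb_ge2 Se' Uq (leq_trans (isT : 3 <= 4) Sq) Cq aq) (leq_trans (subset_leq_card sub) c1).
Qed.
End Main.

Unset Implicit Arguments.

Theorem lemma4 (T : finType) (g : rel T) (h : nat) (K H : {set T}) (a b : T) :
  simple_graph g ->
  connected_graph g ->
  #|holes g| = h ->
  (forall S1 S2, S1 \in holes g -> S2 \in holes g -> S1 != S2 ->
     [disjoint hole_edges g S1 & hole_edges g S2]) ->
  is_maximal_clique g K -> non_edge_clique K ->
  (forall K', is_maximal_clique g K' -> non_edge_clique K' -> K' = K) ->
  H \in holes g -> (a, b) \in hole_edges g H ->
  h <= #|holes (del_edge g a b)| ->
  (a \in K /\ b \in K) /\
  (forall H', H' \in holes (del_edge g a b) -> H' \notin holes g ->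
     exists2 k, k \in K &
       hole_edges (del_edge g a b) H' =
       ((hole_edges g H :\ (a, b)) :\ (b, a)) :|: [set (a, k); (k, a); (b, k); (k, b)]).
Proof.
move=> [Sg Ig] _ Hh Hdisj HK HK3 HKu HH Hab Hcount.
move: (Hab); rewrite in_hole_edges => /and3P [aH bH gab].
have An := analysis Sg Ig Hdisj HKu HK HH aH bH gab.
split; last by move=> H' H1 H2; case: (An H' H1 H2).
case: (eqVneq (holes (del_edge g a b) :\: holes g) set0) => [E0 | /set0Pn [H' ]].
  exfalso.
  have sub : holes (del_edge g a b) \subset holes g :\ H.
    apply/subsetP => S Se; rewrite in_setD1.
    case: (eqVneq S H) => [ES | //=]; first by move: (noHH Sg Ig HH aH bH gab); rewrite -ES Se.
    by move=> _; apply/negPn/negP => nS; move: (in_set0 S); rewrite -E0 in_setD nS Se.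
  move: (subset_leq_card sub) Hcount; rewrite -Hh (cardsD1 H (holes g)) HH.
  by move=> H1 H2; move: (leq_trans H2 H1); rewrite add1n ltnn.
by rewrite in_setD => /andP [H2 H1]; case: (An H' H1 H2).
Qed.
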